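(* For all integers $n\ge 1$ and $q\ge 2$, $N(H(n,q))=n(q-1)$.
   Context: The Hamming graph $H(n,q)$ has as vertices all words of length $n$ over the alphabet $\{1,\dots,q\}$, two words being adjacent iff they differ in exactly one coordinate. A $t$-address is a $t$-tuple with entries in $\{0,a,b\}$ (three distinct symbols). An addressing of length $t$ of a connected graph $G$ is an assignment of $t$-addresses to the vertices such that for any two vertices $u,v$, the graph distance $d(u,v)$ equals the number of coordinates in which one of the two addresses equals $a$ and the other equals $b$. $N(G)$ is the minimum $t$ such that $G$ has an addressing of length $t$. *)

(* Defs.v *)
From mathcomp Require Import all_boot.
Set Implicit Arguments. Unset Strict Implicit. Unset Printing Implicit Defensive.

(* A simple graph: vertex finType T with a (symmetric, irreflexive) relation e. *)

Definition is_dist (T : finType) (e : rel T) (u v : T) (d : nat) : Prop :=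
  (exists p : seq T, [/\ path e u p, last u p = v & size p = d]) /\
  (forall p : seq T, path e u p -> last u p = v -> d <= size p).

Definition connected_graph (T : finType) (e : rel T) : Prop :=
  forall u v : T, exists p : seq T, path e u p /\ last u p = v.

Inductive sym := S0 | Sa | Sb.

Definition ab_pair (x y : sym) : bool :=
  match x, y with
  | Sa, Sb | Sb, Sa => true
  | _, _ => false
  end.

Definition addr_dist (t : nat) (x y : 'I_t -> sym) : nat :=
  #|[pred i : 'I_t | ab_pair (x i) (y i)]|.

Definition addressing (T : finType) (e : rel T) (t : nat) (f : T -> 'I_t -> sym) : Prop :=
  forall u v : T, is_dist e u v (addr_dist (f u) (f v)).

Definition has_addressing (T : finType) (e : rel T) (t : nat) : Prop :=
  exists f : T -> 'I_t -> sym, addressing e f.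

Definition N_is (T : finType) (e : rel T) (m : nat) : Prop :=
  has_addressing e m /\ forall t, has_addressing e t -> m <= t.

Definition hamming_word (n q : nat) := {ffun 'I_n -> 'I_q}.
Definition hamming_adj (n q : nat) : rel (hamming_word n q) :=
  fun x y => #|[pred i : 'I_n | x i != y i]| == 1.

(* Main.v *)
Require Import Defs.
From mathcomp Require Import all_boot.
From mathcomp Require Import zify.
Set Implicit Arguments. Unset Strict Implicit. Unset Printing Implicit Defensive.

Lemma card_sum (T : finType) (P : pred T) : #|P| = \sum_x P x.
Proof.
rewrite -sum1_card big_mkcond /=; apply: eq_bigr => x _.
have -> : (x \in P) = P x by []. by case: (P x).
Qed.

Definition hd n q (u v : hamming_word n q) : nat := \sum_i (u i != v i).

Lemma adj_hd n q (u v : hamming_word n q) : hamming_adj u v = (hd u v == 1).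
Proof. by rewrite /hamming_adj card_sum. Qed.

Lemma hd_tri n q (u x v : hamming_word n q) : hd u v <= hd u x + hd x v.
Proof.
rewrite /hd -big_split /=; apply: leq_sum => i _.
have [->|h] := eqVneq (u i) (x i); first by rewrite leq_addl.
by apply: leq_trans (leq_b1 _) _; rewrite leq_addr.
Qed.

Lemma hd_refl n q (u : hamming_word n q) : hd u u = 0.
Proof. by rewrite /hd big1 // => i _; rewrite eqxx. Qed.

Lemma hd_path n q (u v : hamming_word n q) p :
  path (@hamming_adj n q) u p -> last u p = v -> hd u v <= size p.
Proof.
elim: p u => [|x p IH] u /=; first by move=> _ ->; rewrite hd_refl.
move=> /andP [ux px] lv.
apply: (leq_trans (hd_tri u x v)).
by rewrite adj_hd in ux; rewrite (eqP ux) add1n ltnS IH.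
Qed.

Lemma hd_exists n q (u v : hamming_word n q) :
  exists p, [/\ path (@hamming_adj n q) u p, last u p = v & size p = hd u v].
Proof.
move: {2}(hd u v) (erefl (hd u v)) => d.
elim: d u => [|d IH] u hu.
  exists [::]; split => //=.
  apply/ffunP => i; apply/eqP; apply: contraT => h.
  move: hu; rewrite /hd (bigD1 i) //= h //.
case: (pickP [pred i | u i != v i]) => [i /= hi|h0]; last first.
  by move: hu; rewrite /hd big1 // => i _; have := h0 i => /= /negbFE ->.
have hu0 := hu.
pose u' := [ffun j => if j == i then v i else u j].
have h1 : hd u u' = 1.
  rewrite /hd (bigD1 i) //= big1 => [|j ji]; rewrite !ffunE ?eqxx ?hi //.
  by rewrite (negbTE ji) eqxx.
have h2 : hd u' v = d.
  move: hu; rewrite /hd (bigD1 i) //= hi add1n => -[<-].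
  rewrite (bigD1 i) //= !ffunE eqxx eqxx add0n; apply: eq_bigr => j ji.
  by rewrite ffunE (negbTE ji).
have [p [pp lp sp]] := IH u' h2.
exists (u' :: p); split; [by rewrite /= pp andbT adj_hd h1 | by [] | by rewrite /= sp h2 hu0].
Qed.

Lemma is_dist_hd n q (u v : hamming_word n q) : is_dist (@hamming_adj n q) u v (hd u v).
Proof.
split; first by have [p [? ? ?]] := hd_exists u v; exists p.
by move=> p; apply: hd_path.
Qed.

Lemma is_dist_uniq (T : finType) (e : rel T) u v d1 d2 :
  is_dist e u v d1 -> is_dist e u v d2 -> d1 = d2.
Proof.
move=> [[p1 [a1 b1 c1]] h1] [[p2 [a2 b2 c2]] h2].
apply/eqP; rewrite eqn_leq; apply/andP; split.
  by rewrite -c2; apply: h1.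
by rewrite -c1; apply: h2.
Qed.

Definition kq (x c : nat) : sym := if c == x then Sa else if c < x then Sb else S0.

Lemma kq_ab x y c : ab_pair (kq x c) (kq y c) = (x != y) && (c == minn x y).
Proof.
rewrite /kq /minn.
case: (ltngtP x y) => hxy; case: (ltngtP c x) => hcx; case: (ltngtP c y) => hcy //=;
  exfalso; lia.
Qed.

Lemma sum_kq p x y : x < p.+1 -> y < p.+1 ->
  \sum_(c < p) ab_pair (kq x c) (kq y c) = (x != y).
Proof.
move=> hx hy; under eq_bigr do rewrite kq_ab.
case: eqVneq => [_|hxy] /=; first by rewrite big1.
have hm : minn x y < p by lia.
rewrite (bigD1 (Ordinal hm)) //= eqxx big1 // => c hc.
by move: hc; rewrite -val_eqE /= => /negbTE ->.
Qed.

Lemma sum_split n p (F : nat -> nat -> nat) : 0 < p ->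
  \sum_(k < n * p) F (k %/ p) (k %% p) = \sum_(i < n) \sum_(c < p) F i c.
Proof.
move=> p0; elim: n => [|n IH]; first by rewrite mul0n !big_ord0.
rewrite big_ord_recr /= -IH mulSn addnC.
rewrite -!(big_mkord xpredT (fun k => F (k %/ p) (k %% p))).
rewrite (big_cat_nat (leq0n _) (leq_addr _ _)) /=; congr (_ + _).
rewrite -{1}(add0n (n * p)) big_addn addKn big_mkord; apply: eq_bigr => c _.
rewrite divnDMl // divn_small // add0n.
by rewrite addnC modnMDl modn_small.
Qed.

Definition fup n q (w : hamming_word n.+1 q) (k : 'I_(n.+1 * (q - 1))) : sym :=
  kq (w (inord (k %/ (q - 1)))) (k %% (q - 1)).

Lemma fup_dist n q (u v : hamming_word n.+1 q.+2) :
  addr_dist (fup u) (fup v) = hd u v.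
Proof.
rewrite /addr_dist card_sum /fup /hd.
rewrite (sum_split (n.+1) (fun i c => ab_pair (kq (u (inord i)) c) (kq (v (inord i)) c))) //.
apply: eq_bigr => i _.
rewrite subn1 /= sum_kq ?inord_val //.
Qed.

Lemma upper n q : has_addressing (@hamming_adj n.+1 q.+2) (n.+1 * (q.+2 - 1)).
Proof.
exists (@fup n q.+2) => u v; rewrite fup_dist; exact: is_dist_hd.
Qed.

From mathcomp Require Import all_algebra ring.

Section Lower.
Import GRing.Theory Num.Theory.
Local Open Scope ring_scope.

Definition isa (s : sym) : bool := if s is Sa then true else false.
Definition isb (s : sym) : bool := if s is Sb then true else false.

Lemma ab_nat x y : (ab_pair x y : nat) = (isa x * isb y + isb x * isa y)%N.
Proof. by case: x; case: y. Qed.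

Lemma sd (T : finType) (a : T) (g : T -> rat) : \sum_w (w == a)%:R * g w = g a.
Proof.
rewrite (bigD1 a) //= eqxx mul1r big1 ?addr0 // => w /negbTE ->; by rewrite mul0r.
Qed.

Lemma sd1 (T : finType) (a : T) : \sum_w (w == a)%:R = 1 :> rat.
Proof.
transitivity (\sum_w (w == a)%:R * (fun _ => 1 : rat) w); last exact: sd.
by apply: eq_bigr => w _; rewrite mulr1.
Qed.

Lemma Qzero (T : finType) (t : nat) (f : T -> 'I_t -> sym) (D : T -> T -> nat)
  (X : T -> rat) :
  (forall u v, D u v = addr_dist (f u) (f v)) ->
  (forall k, \sum_w X w * (isa (f w k))%:R = 0) ->
  \sum_u \sum_v X u * X v * (D u v)%:R = 0.
Proof.
move=> hD hX.
have E u v : (D u v)%:R = \sum_k ((isa (f u k))%:R * (isb (f v k))%:R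
      + (isb (f u k))%:R * (isa (f v k))%:R) :> rat.
  rewrite hD /addr_dist card_sum natr_sum; apply: eq_bigr => k _.
  by rewrite ab_nat natrD !natrM.
under eq_bigr do under eq_bigr do rewrite E mulr_sumr.
under eq_bigr do rewrite exchange_big.
rewrite exchange_big big1 // => k _.
transitivity ((\sum_u X u * (isa (f u k))%:R) * (\sum_v X v * (isb (f v k))%:R)
  + (\sum_u X u * (isb (f u k))%:R) * (\sum_v X v * (isa (f v k))%:R)).
  rewrite !mulr_suml -big_split; apply: eq_bigr => u _.
  rewrite !mulr_sumr -big_split; apply: eq_bigr => v _ /=; ring.
by rewrite !hX mul0r mulr0 addr0.
Qed.

Lemma Qneg n q (X : hamming_word n q -> rat) : \sum_w X w = 0 ->
  \sum_u \sum_v X u * X v * (hd u v)%:R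
  = - \sum_i \sum_(s : 'I_q) (\sum_w X w * (w i == s)%:R) ^+ 2.
Proof.
move=> hX.
have E u v : (hd u v)%:R = \sum_i (1 - \sum_(s : 'I_q) (u i == s)%:R * (v i == s)%:R) :> rat.
  rewrite /hd natr_sum; apply: eq_bigr => i _.
  rewrite (bigD1 (u i)) //= eqxx mul1r big1 ?addr0; last first.
    by move=> s hs; rewrite eq_sym (negbTE hs) mul0r.
  by rewrite eq_sym; case: eqP => _; rewrite ?subrr ?subr0.
under eq_bigr do under eq_bigr do rewrite E mulr_sumr.
under eq_bigr do rewrite exchange_big.
rewrite exchange_big -sumrN; apply: eq_bigr => i _.
transitivity ((\sum_u X u) * (\sum_v X v) -
   \sum_(s : 'I_q) (\sum_u X u * (u i == s)%:R) * (\sum_v X v * (v i == s)%:R)); last first.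
  rewrite hX mul0r sub0r; congr (- _); apply: eq_bigr => s _; by rewrite expr2.
under [X in _ - X]eq_bigr do rewrite mulr_suml.
rewrite [X in _ - X]exchange_big /= mulr_suml -sumrB; apply: eq_bigr => u _.
under [X in _ - X]eq_bigr do rewrite mulr_sumr.
rewrite [X in _ - X]exchange_big /= mulr_sumr -sumrB; apply: eq_bigr => v _.
rewrite mulrBr mulr1 mulr_sumr; congr (_ - _); apply: eq_bigr => s _ /=; ring.
Qed.

Lemma inord_eq n a b : (a < n.+1)%N -> (b < n.+1)%N ->
  (inord a == inord b :> 'I_n.+1) = (a == b)%N.
Proof. by move=> ha hb; rewrite -val_eqE /= !inordK. Qed.

Lemma divmod_eq p (j j0 : nat) :
  (j == j0)%N = (j %/ p == j0 %/ p)%N && (j %% p == j0 %% p)%N.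
Proof.
case: (j =P j0) => [->|ne]; first by rewrite !eqxx.
apply/esym/negbTE; apply/negP => /andP[/eqP h1 /eqP h2]; apply: ne.
by rewrite (divn_eq j p) (divn_eq j0 p) h1 h2.
Qed.

Lemma lower n q t (f : hamming_word n.+1 q.+2 -> 'I_t -> sym) :
  addressing (@hamming_adj _ _) f -> (n.+1 * q.+1 <= t)%N.
Proof.
move=> hf; rewrite leqNgt; apply/negP => ht.
pose m := (n.+1 * q.+1)%N.
pose z : hamming_word n.+1 q.+2 := [ffun _ => ord0].
pose e (j : 'I_m) : hamming_word n.+1 q.+2 :=
  [ffun i => if i == inord (j %/ q.+1) then inord (j %% q.+1).+1 else ord0].
pose M : 'M[rat]_(m, t) := \matrix_(j, k) ((isa (f (e j) k))%:R - (isa (f z k))%:R).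
have nfree : ~~ row_free M.
  by rewrite -row_leq_rank -ltnNge; apply: leq_ltn_trans (rank_leq_col M) ht.
have : kermx M != 0 by rewrite kermx_eq0.
set K := kermx M => Knz.
have [r [j0 hj0]] : exists r, exists j, K r j != 0.
  case: (pickP [pred rj : 'I_m * 'I_m | K rj.1 rj.2 != 0]) => [[r j] /= h|h0].
    by exists r, j.
  move/eqP: Knz; case; apply/matrixP => r j.
  rewrite [RHS]mxE; apply/eqP; exact: negbFE (h0 (r, j)).
pose y (j : 'I_m) : rat := K r j.
have hy k : \sum_j y j * M j k = 0.
  by have := congr1 (fun A : 'M[rat]_(m, t) => A r k) (mulmx_ker M); rewrite mxE [RHS]mxE.
pose X (w : hamming_word n.+1 q.+2) := \sum_j y j * ((w == e j)%:R - (w == z)%:R).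
have hX0 : \sum_w X w = 0.
  rewrite exchange_big big1 // => j _; by rewrite -mulr_sumr sumrB !sd1 subrr mulr0.
have PX (g : hamming_word n.+1 q.+2 -> rat) :
    \sum_w X w * g w = \sum_j y j * (g (e j) - g z).
  under eq_bigr do rewrite mulr_suml.
  rewrite exchange_big; apply: eq_bigr => j _.
  under eq_bigr do rewrite -mulrA mulrBl.
  by rewrite -mulr_sumr sumrB !sd.
have hXa k : \sum_w X w * (isa (f w k))%:R = 0.
  rewrite PX -[RHS](hy k); by apply: eq_bigr => j _; rewrite mxE.
have Q0 := Qzero (D := @hd _ _) (fun u v => is_dist_uniq (is_dist_hd u v) (hf u v)) hXa.
rewrite Qneg // in Q0.
have hd0 : (j0 %/ q.+1 < n.+1)%N by rewrite ltn_divLR.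
have hm0 : ((j0 %% q.+1).+1 < q.+2)%N by rewrite ltnS ltn_pmod.
pose i0 : 'I_n.+1 := inord (j0 %/ q.+1).
pose s0 : 'I_q.+2 := inord (j0 %% q.+1).+1.
have P0 : \sum_w X w * (w i0 == s0)%:R = y j0.
  rewrite PX -[RHS](sd j0 y); apply: eq_bigr => j _.
  have hz : (z i0 == s0) = false by rewrite ffunE -val_eqE /= inordK.
  rewrite hz subr0 mulrC; congr (_ * _); congr (_%:R).
  have hd1 : (j %/ q.+1 < n.+1)%N by rewrite ltn_divLR.
  have hm1 : ((j %% q.+1).+1 < q.+2)%N by rewrite ltnS ltn_pmod.
  congr (nat_of_bool _); rewrite -[RHS]val_eqE /= ffunE /i0 inord_eq // (divmod_eq q.+1 j j0) [X in X && _]eq_sym.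
  case: (j0 %/ q.+1 =P j %/ q.+1)%N => _ /=; first by rewrite /s0 inord_eq.
  by rewrite -val_eqE /= inordK.
have : (\sum_w X w * (w i0 == s0)%:R) ^+ 2 <=
   \sum_i \sum_(s : 'I_q.+2) (\sum_w X w * (w i == s)%:R) ^+ 2.
  rewrite (bigD1 i0) //= (bigD1 s0) //= -addrA lerDl.
  by apply: addr_ge0; apply: sumr_ge0 => *; [exact: sqr_ge0 | apply: sumr_ge0 => *; exact: sqr_ge0].
have : \sum_i \sum_(s : 'I_q.+2) (\sum_w X w * (w i == s)%:R) ^+ 2 = 0.
  by apply/eqP; rewrite -oppr_eq0 Q0.
move=> -> ; rewrite P0 => hle.
have : 0 < y j0 ^+ 2 by rewrite lt0r sqrf_eq0 hj0 sqr_ge0.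
by rewrite real_ltNge ?hle // ?realE ?sqr_ge0 ?sumr_ge0.

Qed.

End Lower.

Theorem theorem13 (n q : nat) :
  1 <= n -> 2 <= q -> N_is (@hamming_adj n q) (n * (q - 1)).
Proof.
case: n => [//|n] _; case: q => [//|[//|q]] _.
split; first exact: upper.
move=> t [f hf]; rewrite subSS subn0; exact: lower hf.
Qed.
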